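(* Let $\mathcal{A}\subset\mathcal{B}\subset\mathcal{N}=\{1,\dots,N\}$ and let $\gamma,\ell,\kappa$ satisfy $$\tfrac12<\gamma\le 1,\qquad \ell\in\Big(0,2\cos^{-1}\big(\tfrac1\gamma-1\big)\Big),\qquad \kappa>\kappa_*(\gamma,\ell,D(\Omega_\mathcal{B})):=\frac{D(\Omega_\mathcal{B})}{\gamma\sin\ell-2(1-\gamma)\sin\frac{\ell}{2}}.$$ Let $\Theta$ be a solution of the Kuramoto model such that $\Theta_\mathcal{A}$ is a $\gamma$-ensemble of arclength $\le\ell$ at time $0$; replace each $\theta_i$, $i\in\mathcal{A}$, by its $2\pi$-shift realizing $D(\Theta_\mathcal{A}(0))\le\ell$ (this is again a solution). Then: (1) $\sup_{t\ge0}D(\Theta_\mathcal{A}(t))\le\ell$ and $\limsup_{t\to\infty}D(\Theta_\mathcal{A}(t))\le\phi_1(\gamma,\kappa,D(\Omega_\mathcal{B}))$; (2) $\sup_{t\ge0}D(\Theta_\mathcal{B}(t))<\infty$; (3) if in addition $$\frac{D(\Omega_\mathcal{B})}{\kappa}<\frac{(2\gamma-1)^{3/2}}{\sqrt{2\gamma}}\cdot\frac{2-\gamma}{\sqrt{\gamma/2}+(1-\gamma)},$$ then for $i,j\in\mathcal{A}$: if $\nu_i>\nu_j$, $$\frac{\nu_i-\nu_j}{\kappa}\le\liminf_{t\to\infty}(\theta_i(t)-\theta_j(t))\le\limsup_{t\to\infty}(\theta_i(t)-\theta_j(t))\le\frac{\pi}{2\sqrt2\,(\gamma\cos\phi_1-(1-\gamma))}\cdot\frac{\nu_i-\nu_j}{\kappa},$$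 with $\phi_1=\phi_1(\gamma,\kappa,D(\Omega_\mathcal{B}))$; and if $\nu_i=\nu_j$, then $\lim_{t\to\infty}(\theta_i(t)-\theta_j(t))=0$.
   Context: Kuramoto model: for $N\ge2$, $\Omega=(\nu_1,\dots,\nu_N)\in\mathbb{R}^N$, $\kappa\ge0$, the phases $\Theta(t)=(\theta_1,\dots,\theta_N)\in\mathbb{R}^N$ satisfy $\dot\theta_i=\nu_i+\frac{\kappa}{N}\sum_{j=1}^N\sin(\theta_j-\theta_i)$. For $\mathcal{A}\subset\mathcal{N}=\{1,\dots,N\}$: $\Theta_\mathcal{A}=(\theta_i)_{i\in\mathcal{A}}$, $D(\Theta_\mathcal{A})=\max_{i,j\in\mathcal{A}}|\theta_i-\theta_j|$, $D(\Omega_\mathcal{A})=\max_{i,j\in\mathcal{A}}|\nu_i-\nu_j|$. For $\gamma\in(1/2,1]$: $\Theta_\mathcal{A}$ is a $\gamma$-ensemble if $|\mathcal{A}|/N\ge\gamma$; it is a $\gamma$-ensemble of arclength $\le\ell$ at time $t_0$ if moreover, after replacing some $\theta_i$ ($i\in\mathcal{A}$) by $\theta_i+2\pi m_i$ with $m_i\in\mathbb{Z}$, one has $D(\Theta_\mathcal{A}(t_0))\le\ell$. Let $f(\theta)=\gamma\sin\theta-2(1-\gamma)\sin\frac\theta2$. For $\kappa>0$ with $D(\Omega_\mathcal{B})/\kappa<\max_{[0,2\cos^{-1}((1-\gamma)/\gamma)]}f$, $\phi_1(\gamma,\kappa,D(\Omega_\mathcal{B}))$ denotes the smaller root of $f(\theta)=D(\Omega_\mathcal{B})/\kappa$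 in $[0,2\cos^{-1}\frac{1-\gamma}{\gamma})$. *)

(* Defs.v *)
From mathcomp Require Import all_boot.
From Stdlib Require Import Reals.
From Coquelicot Require Import Coquelicot.
Set Implicit Arguments. Unset Strict Implicit. Unset Printing Implicit Defensive.

Open Scope R_scope.

Definition kuramoto_rhs (N : nat) (nu : 'I_N -> R) (kappa : R)
  (x : 'I_N -> R) (i : 'I_N) : R :=
  nu i + kappa / INR N * \big[Rplus/0]_(j < N) sin (x j - x i).

Definition kuramoto_solution (N : nat) (nu : 'I_N -> R) (kappa : R)
  (theta : 'I_N -> R -> R) : Prop :=
  forall (i : 'I_N) (t : R),
    is_derive (fun s => theta i s) t (kuramoto_rhs nu kappa (fun j => theta j t) i).

(* D(x_A) = max_{i,j in A} |x_i - x_j|  (0 if A is empty) *)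
Definition diam (N : nat) (A : {set 'I_N}) (x : 'I_N -> R) : R :=
  \big[Rmax/0]_(i in A) \big[Rmax/0]_(j in A) Rabs (x i - x j).

Definition gamma_ensemble (N : nat) (A : {set 'I_N}) (gamma : R) : Prop :=
  INR #|A| / INR N >= gamma.

Definition shift_on (N : nat) (A : {set 'I_N}) (m : 'I_N -> Z)
  (theta : 'I_N -> R -> R) : 'I_N -> R -> R :=
  fun i t => if i \in A then theta i t + 2 * PI * IZR (m i) else theta i t.

Definition gamma_ensemble_arclength (N : nat) (A : {set 'I_N}) (gamma ell : R)
  (theta : 'I_N -> R -> R) (t0 : R) : Prop :=
  gamma_ensemble A gamma /\
  exists m : 'I_N -> Z, diam A (fun i => shift_on A m theta i t0) <= ell.

Definition fgam (gamma th : R) : R := gamma * sin th - 2 * (1 - gamma) * sin (th / 2).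

Definition is_phi1 (gamma kappa d p : R) : Prop :=
  0 <= p < 2 * acos ((1 - gamma) / gamma) /\ fgam gamma p = d / kappa /\
  (forall q, 0 <= q < 2 * acos ((1 - gamma) / gamma) -> fgam gamma q = d / kappa -> p <= q).

Definition limsup_le (f : R -> R) (c : R) : Prop :=
  forall eps, 0 < eps -> exists T, forall t, T <= t -> f t <= c + eps.

Definition liminf_ge (f : R -> R) (c : R) : Prop :=
  forall eps, 0 < eps -> exists T, forall t, T <= t -> c - eps <= f t.

(* Main.v *)
From HB Require Import structures.
Require Import Defs.
From mathcomp Require Import all_boot.
From Stdlib Require Import Reals Lra Lia ZArith Classical.
From Coquelicot Require Import Coquelicot.
Open Scope R_scope.

Lemma sin_Zper x (k : Z) : sin (x + 2 * PI * IZR k) = sin x.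
Proof.
destruct (Z_le_gt_dec 0 k) as [H|H].
- rewrite <- (Z2Nat.id k H), <- INR_IZR_INZ.
  replace (2 * PI * INR (Z.to_nat k)) with (2 * INR (Z.to_nat k) * PI) by ring.
  apply sin_period.
- assert (H' : (0 <= - k)%Z) by lia.
  pose proof (sin_period (x + 2 * PI * IZR k) (Z.to_nat (- k))) as E.
  rewrite INR_IZR_INZ Z2Nat.id // opp_IZR in E.
  rewrite <- E; f_equal; ring.
Qed.

Lemma sin_sub_sin p q : sin p - sin q = - 2 * cos ((p + q) / 2) * sin ((q - p) / 2).
Proof.
rewrite form4. replace ((q - p)/2) with (- ((p - q)/2)) by field.
rewrite sin_neg; ring.
Qed.

Lemma cos_ge_abs M h : Rabs M <= h -> h <= PI -> cos h <= cos M.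
Proof.
intros H1 H2. rewrite <- (cos_neg M) in *.
destruct (Rle_dec 0 M).
- rewrite cos_neg. rewrite Rabs_right in H1; [|lra]. apply cos_decr_1; lra.
- rewrite Rabs_left in H1; [|lra]. apply cos_decr_1; lra.
Qed.

Lemma sin_lip a b : Rabs (sin a - sin b) <= Rabs (a - b).
Proof.
rewrite form4.
assert (Hs : forall x, Rabs (sin x) <= Rabs x).
{ assert (Hp : forall x, 0 <= x -> - x <= sin x <= x).
  { intros x Hx. pose proof (SIN_bound x). pose proof PI2_3_2. split.
    - destruct (Rle_dec x 1). + pose proof (sin_ge_0 x Hx). lra. + lra.
    - destruct (Req_dec x 0). + subst; rewrite sin_0; lra. + pose proof (sin_lt_x x). lra. }
  intro x. destruct (Rle_dec 0 x).
  - rewrite (Rabs_right x) ; [|lra]. apply Rabs_le. auto.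
  - rewrite (Rabs_left x); [|lra]. apply Rabs_le. pose proof (Hp (-x)). rewrite sin_neg in H. lra. }
rewrite Rabs_mult Rabs_mult.
pose proof (Hs ((a-b)/2)). pose proof (COS_bound ((a+b)/2)).
assert (Rabs (cos ((a+b)/2)) <= 1) by (apply Rabs_le; lra).
rewrite Rabs_right; [|lra].
replace (Rabs (a - b)) with (2 * Rabs ((a-b)/2)).
2:{ rewrite Rabs_div; [|lra]. rewrite (Rabs_right 2); [field|lra]. }
assert (0 <= Rabs (sin ((a - b) / 2))) by apply Rabs_pos.
assert (0 <= Rabs (cos ((a + b) / 2))) by apply Rabs_pos.
nra.
Qed.


HB.instance Definition _ := Monoid.isComLaw.Build R 0 Rplus (fun x y z => esym (Rplus_assoc x y z)) Rplus_comm Rplus_0_l.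

Lemma iter_Rplus (n : nat) c : ssrnat.iter n (Rplus c) 0 = INR n * c.
Proof. elim: n => [|n IH] /=; [ring|]. rewrite IH; case: n {IH} => [|n] /=; ring. Qed.

Lemma sumR_le (I : Type) (r : seq I) (P : pred I) (F G : I -> R) :
  (forall i, P i -> F i <= G i) ->
  \big[Rplus/0]_(i <- r | P i) F i <= \big[Rplus/0]_(i <- r | P i) G i.
Proof.
move=> H. apply: (big_ind2 (fun x y => x <= y)) => //; [lra|]. move=> *; lra.
Qed.

Lemma sumR_opp (I : Type) (r : seq I) (P : pred I) (F : I -> R) :
  \big[Rplus/0]_(i <- r | P i) (- F i) = - \big[Rplus/0]_(i <- r | P i) F i.
Proof.
symmetry; apply: (big_morph Ropp) => [x y|] /=; ring.
Qed.

Lemma sumR_sub (I : Type) (r : seq I) (P : pred I) (F G : I -> R) :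
  \big[Rplus/0]_(i <- r | P i) (F i - G i) =
  \big[Rplus/0]_(i <- r | P i) F i - \big[Rplus/0]_(i <- r | P i) G i.
Proof.
rewrite /Rminus big_split /=. by rewrite sumR_opp.
Qed.

Lemma sumR_const_in (N : nat) (A : {set 'I_N}) c :
  \big[Rplus/0]_(k in A) c = INR #|A| * c.
Proof. by rewrite big_const iter_Rplus. Qed.

Lemma sumR_scal (I : Type) (r : seq I) (P : pred I) (F : I -> R) c :
  \big[Rplus/0]_(i <- r | P i) (c * F i) = c * \big[Rplus/0]_(i <- r | P i) F i.
Proof.
symmetry; apply: (big_morph (fun x => c * x)) => [x y|] /=; ring.
Qed.

Lemma sum_lb (N : nat) (A : {set 'I_N}) (c : 'I_N -> R) a b :
  (forall k, k \in A -> a <= c k) -> (forall k, k \notin A -> b <= c k) ->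
  INR #|A| * a + (INR N - INR #|A|) * b <= \big[Rplus/0]_(k < N) c k.
Proof.
move=> Ha Hb.
rewrite (bigID (fun k => k \in A)) /=.
have E1 : INR #|A| * a <= \big[Rplus/0]_(i in A) c i.
{ rewrite -sumR_const_in. apply: sumR_le => i Hi. by apply Ha. }
have E2 : (INR N - INR #|A|) * b <= \big[Rplus/0]_(i < N | i \notin A) c i.
{ have -> : INR N - INR #|A| = INR #|~: A|.
  { have H := cardsC A. rewrite card_ord in H. have H2 : INR (#|A| + #|~: A|) = INR N by rewrite H. rewrite -H2 plus_INR. ring. }
  rewrite -sumR_const_in. rewrite (eq_bigl (fun i => i \notin A)); last by move=> i; rewrite in_setC.
  apply: sumR_le => i Hi. by apply Hb. }
exact (Rplus_le_compat _ _ _ _ E1 E2).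
Qed.

Lemma sum_ub (N : nat) (c : 'I_N -> R) b :
  (forall k, c k <= b) -> \big[Rplus/0]_(k < N) c k <= INR N * b.
Proof.
move=> H. have -> : INR N * b = \big[Rplus/0]_(k < N) b.
{ by rewrite big_const_ord iter_Rplus. }
apply: sumR_le => i _; apply H.
Qed.

Lemma bigmax_ge (I : eqType) (r : seq I) (P : pred I) (F : I -> R) i :
  i \in r -> P i -> F i <= \big[Rmax/0]_(j <- r | P j) F j.
Proof.
elim: r => [|a r IH] //. rewrite in_cons big_cons => /orP [/eqP -> | Hi] HP.
- rewrite HP. apply Rmax_l.
- have := IH Hi HP. case: (P a) => // H. eapply Rle_trans; [exact H | apply Rmax_r].
Qed.

Lemma diam_pair (N : nat) (A : {set 'I_N}) (x : 'I_N -> R) i j :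
  i \in A -> j \in A -> Rabs (x i - x j) <= diam A x.
Proof.
move=> Hi Hj. rewrite /diam.
have H1 : Rabs (x i - x j) <= \big[Rmax/0]_(j in A) Rabs (x i - x j).
{ apply: (@bigmax_ge _ _ _ (fun j => Rabs (x i - x j))) => //. by rewrite mem_index_enum. }
have H2 : \big[Rmax/0]_(j in A) Rabs (x i - x j) <= \big[Rmax/0]_(i in A) \big[Rmax/0]_(j in A) Rabs (x i - x j).
{ apply: (@bigmax_ge _ _ _ (fun i => \big[Rmax/0]_(j in A) Rabs (x i - x j))) => //. by rewrite mem_index_enum. }
lra.
Qed.

Lemma diam_le (N : nat) (A : {set 'I_N}) (x : 'I_N -> R) c :
  0 <= c -> (forall i j, i \in A -> j \in A -> Rabs (x i - x j) <= c) -> diam A x <= c.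
Proof.
move=> Hc H. rewrite /diam.
apply: (big_ind (fun v => v <= c)) => //.
- move=> a b Ha Hb. by apply Rmax_lub.
- move=> i Hi. apply: (big_ind (fun v => v <= c)) => //.
  + move=> a b Ha Hb. by apply Rmax_lub.
  + move=> j Hj. by apply H.
Qed.

Lemma diam_ge0 (N : nat) (A : {set 'I_N}) (x : 'I_N -> R) : 0 <= diam A x.
Proof.
rewrite /diam. apply: (big_ind (fun v => 0 <= v)) => //; [lra| |].
- move=> a b Ha Hb. eapply Rle_trans; [exact Ha| apply Rmax_l].
- move=> i Hi. apply: (big_ind (fun v => 0 <= v)) => //; [lra| |].
  + move=> a b Ha Hb. eapply Rle_trans; [exact Ha| apply Rmax_l].
  + move=> j Hj. apply Rabs_pos.
Qed.


Lemma deriv_cont f s l : is_derive f s l ->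
  forall eps, 0 < eps -> exists del, 0 < del /\ forall v, Rabs (v - s) < del -> Rabs (f v - f s) < eps.
Proof.
move=> /is_derive_Reals H.
have Hd : derivable_pt f s by exists l.
have C := derivable_continuous_pt f s Hd.
move=> eps He. have [a [Ha Hb]] := C eps He.
exists a; split => // v Hv. destruct (Req_dec v s) as [->|Hne].
- rewrite Rminus_eq_0 Rabs_R0; lra.
- apply (Hb v). split => //. split => //. by apply not_eq_sym.
Qed.

Lemma deriv_neg_left f s l : is_derive f s l -> l < 0 ->
  exists del, 0 < del /\ forall h, 0 < h < del -> f s < f (s - h).
Proof.
move=> /is_derive_Reals H Hl.
have [d Hd] := H (- l / 2) ltac:(lra).
exists d; split; [apply cond_pos|]. move=> h Hh.
have := Hd (- h) ltac:(lra) ltac:(rewrite Rabs_left; lra).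
move/Rabs_def2 => [H1 H2].
replace (s + - h) with (s - h) in H1, H2 by ring.
have : (f (s - h) - f s) / - h < l / 2 by lra.
move=> H3.
have H4 : (f (s - h) - f s) = ((f (s - h) - f s) / - h) * (- h) by field; lra.
nra.
Qed.

Lemma finite_delta (I : eqType) (r : seq I) (P : I -> R -> Prop) s :
  (forall q, q \in r -> exists del, 0 < del /\ forall v, Rabs (v - s) < del -> P q v) ->
  exists del, 0 < del /\ forall q v, q \in r -> Rabs (v - s) < del -> P q v.
Proof.
elim: r => [|a r IH] H.
- exists 1; split; [lra|] => q v; by rewrite in_nil.
- have [d1 [Hd1 H1]] := H a (mem_head _ _).
  have [d2 [Hd2 H2]] : exists del, 0 < del /\ forall q v, q \in r -> Rabs (v - s) < del -> P q v.
  { apply IH => q Hq. apply H. by rewrite in_cons Hq orbT. }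
  exists (Rmin d1 d2); split; [by apply Rmin_pos|].
  move=> q v. rewrite in_cons => /orP [/eqP -> | Hq] Hv.
  + apply H1. have := Rmin_l d1 d2; lra.
  + apply H2 => //. have := Rmin_r d1 d2; lra.
Qed.

Lemma barrier (I : eqType) (r : seq I) (z dz : I -> R -> R) t1 t2 :
  (forall q t, q \in r -> is_derive (z q) t (dz q t)) ->
  (forall q, q \in r -> z q t1 < 0) ->
  (forall t q, t1 <= t <= t2 -> q \in r -> (forall q', q' \in r -> z q' t <= 0) ->
      z q t = 0 -> dz q t < 0) ->
  forall t q, t1 <= t <= t2 -> q \in r -> z q t < 0.
Proof.
move=> Hd H0 Hc t3 q3 Ht3 Hq3.
apply Rnot_le_lt => Hbad.
set E := fun u => t1 <= u <= t3 /\ forall v q, t1 <= v <= u -> q \in r -> z q v < 0.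
have HE1 : E t1.
{ split; [lra|]. move=> v q Hv Hq. replace v with t1 by lra. by apply H0. }
have Hbd : bound E by exists t3 => u [Hu _]; lra.
have [s [Hub Hlub]] := completeness E Hbd (ex_intro _ t1 HE1).
have Hs1 : t1 <= s by apply Hub.
have Hs2 : s <= t3 by apply Hlub => u [Hu _]; lra.
have Hb : forall v q, t1 <= v < s -> q \in r -> z q v < 0.
{ move=> v q Hv Hq. apply NNPP => Hn.
  have : is_upper_bound E v.
  { move=> u [Hu Hu2]. apply Rnot_lt_le => Hvu. apply Hn. apply (Hu2 v q) => //; lra. }
  move/Hlub. lra. }
have Hcont : forall q, q \in r -> forall eps, 0 < eps -> exists del, 0 < del /\
    forall v, Rabs (v - s) < del -> Rabs (z q v - z q s) < eps.
{ move=> q Hq. apply: deriv_cont. exact: Hd. }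
have Hle : forall q, q \in r -> z q s <= 0.
{ move=> q Hq. destruct (Req_dec s t1) as [->|Hne]; [by apply Rlt_le, H0|].
  apply Rnot_lt_le => Hpos.
  have [d [Hd0 Hdd]] := Hcont q Hq (z q s) Hpos.
  set v := Rmax t1 (s - d / 2).
  have Hv1 : t1 <= v by apply Rmax_l.
  have Hv2 : v < s by rewrite /v; apply Rmax_lub_lt; lra.
  have Hv3 : Rabs (v - s) < d.
  { rewrite Rabs_left; [|lra]. have := Rmax_r t1 (s - d/2). rewrite -/v. lra. }
  have A3 := Hb v q (conj Hv1 Hv2) Hq. have := Hdd v Hv3. move/Rabs_def2 => [A1 A2]. lra. }
have [q [Hq Hzq]] : exists q, q \in r /\ z q s = 0.
{ apply NNPP => Hn.
  have Hall : forall q, q \in r -> z q s < 0.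
  { move=> q Hq. have := Hle q Hq. move=> [//|Heq]. exfalso; apply Hn; by exists q. }
  destruct (Req_dec s t3) as [Heq|Hne].
  { have := Hall q3 Hq3. rewrite Heq. lra. }
  have [d [Hd0 Hdd]] : exists del, 0 < del /\ forall q v, q \in r -> Rabs (v - s) < del -> z q v < 0.
  { apply finite_delta => q Hq.
    have [d [Hd0 Hdd]] := Hcont q Hq (- z q s) ltac:(have := Hall q Hq; lra).
    exists d; split => // v Hv. have := Hdd v Hv. move/Rabs_def2 => [A1 A2]. lra. }
  set u := Rmin t3 (s + d / 2).
  have Hu1 : s < u by rewrite /u; apply Rmin_glb_lt; lra.
  have Hu2 : u <= t3 by apply Rmin_l.
  have Hu3 : u <= s + d/2 by apply Rmin_r.
  have : E u.
  { split; [lra|]. move=> v q Hv Hq.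
    destruct (Rlt_dec v s) as [Hvs|Hvs]; [apply Hb => //; lra|].
    apply Hdd => //. rewrite Rabs_right; lra. }
  move/Hub. lra. }
have Hst : s <> t1 by move=> Heq; have := H0 q Hq; rewrite -Heq; lra.
have Hdneg := Hc s q (conj Hs1 (Rle_trans _ _ _ Hs2 (proj2 Ht3))) Hq Hle Hzq.
have [d [Hd0 Hdd]] := deriv_neg_left _ _ _ (Hd q s Hq) Hdneg.
set h := Rmin d (s - t1) / 2.
have Hh1 : 0 < h by rewrite /h; have := Rmin_glb_lt d (s - t1) 0; lra.
have Hh2 : h < d by rewrite /h; have := Rmin_l d (s - t1); lra.
have Hh3 : h < s - t1 by rewrite /h; have := Rmin_r d (s - t1); lra.
have := Hdd h (conj Hh1 Hh2). have := Hb (s - h) q ltac:(lra) Hq. lra.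
Qed.

Lemma stay (y dy : R -> R) t1 c :
  (forall t, is_derive y t (dy t)) -> c < y t1 ->
  (forall t, t1 <= t -> y t = c -> 0 < dy t) -> forall t, t1 <= t -> c < y t.
Proof.
move=> Hd H1 H t Ht.
have := @barrier unit [:: tt] (fun _ s => c - y s) (fun _ s => - dy s) t1 t.
move=> B. suff : c - y t < 0 by lra. apply: (B _ _ _ t tt (conj Ht (Rle_refl t)) (mem_head _ _)).
- move=> q s _. have H2 := is_derive_minus (fun _ => c) y s 0 (dy s) (is_derive_const c s) (Hd s).
  replace (- dy s) with (minus 0 (dy s)); [exact H2|]. rewrite /minus /plus /opp /=. ring.
- move=> q _; lra.
- move=> s q Hs _ _ Hz. have := H s (proj1 Hs) ltac:(lra). lra.
Qed.

Lemma reach (y dy : R -> R) T c r :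
  (forall t, is_derive y t (dy t)) -> 0 < r ->
  (forall t, T <= t -> y t <= c -> r <= dy t) -> exists T', forall t, T' <= t -> c < y t.
Proof.
move=> Hd Hr H.
have [t1 [Ht1 Hy1]] : exists t1, T <= t1 /\ c < y t1.
{ apply NNPP => Hn.
  have Hall : forall t, T <= t -> y t <= c.
  { move=> t Ht. apply Rnot_lt_le => Hc. apply Hn. by exists t. }
  set L := Rabs (c - y T) / r + 1.
  have HL : 0 < L by rewrite /L; have := Rabs_pos (c - y T); have := Rdiv_le_0_compat (Rabs (c - y T)) r (Rabs_pos _) Hr; lra.
  have [xi [E Hxi]] := MVT_cor2 y dy T (T + L) ltac:(lra)
     (fun x Hx => proj1 (is_derive_Reals _ _ _) (Hd x)).
  have Hdy := H xi ltac:(lra) (Hall xi ltac:(lra)).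
  have Hyl := Hall (T + L) ltac:(lra).
  have : r * L <= c - y T by nra.
  rewrite /L Rmult_plus_distr_l. have -> : r * (Rabs (c - y T) / r) = Rabs (c - y T) by field; lra.
  have := Rle_abs (c - y T). lra. }
exists t1 => t Ht. apply: (stay _ _ t1 c Hd Hy1) => // s Hs Hys.
have := H s ltac:(lra) ltac:(lra). lra.
Qed.


Definition fder (g th : R) := g * cos th - (1 - g) * cos (th / 2).

Lemma fgam_derive g th : derivable_pt_lim (fgam g) th (fder g th).
Proof.
apply is_derive_Reals. rewrite /fgam /fder.
auto_derive; [done|]. set (u := cos (th * / 2)). have -> : cos (th / 2) = u by []. nra.
Qed.

Lemma fgam_cont g : continuity (fgam g).
Proof. move=> th. apply: derivable_continuous_pt. exists (fder g th). apply fgam_derive. Qed.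

Lemma fgam_lip g x y : 0 <= g <= 1 -> Rabs (fgam g x - fgam g y) <= Rabs (x - y).
Proof.
move=> Hg. rewrite /fgam.
have H1 := sin_lip x y. have H2 := sin_lip (x/2) (y/2).
replace (x / 2 - y / 2) with ((x - y) / 2) in H2 by field.
rewrite Rabs_div in H2; [|lra]. rewrite (Rabs_right 2) in H2; [|lra].
replace (g * sin x - 2 * (1 - g) * sin (x / 2) - (g * sin y - 2 * (1 - g) * sin (y / 2)))
  with (g * (sin x - sin y) + (-(2 * (1 - g))) * (sin (x/2) - sin (y/2))) by ring.
eapply Rle_trans; [apply Rabs_triang|]. rewrite !Rabs_mult.
rewrite (Rabs_right g); [|lra]. rewrite Rabs_Ropp (Rabs_right (2 * (1-g))); [|lra].
nra.
Qed.

Lemma fgam_half g th : fgam g th = 2 * sin (th / 2) * (g * cos (th / 2) - (1 - g)).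
Proof.
rewrite /fgam. have -> : th = 2 * (th / 2) by field. rewrite sin_2a.
have -> : 2 * (th / 2) / 2 = th / 2 by field. ring.
Qed.

Section F.
Variable g : R.
Hypothesis Hg : 1 / 2 < g <= 1.
Let c := (1 - g) / g.
Let a0 := acos c.

Lemma c_bounds : 0 <= c < 1.
Proof. rewrite /c. split. - apply Rdiv_le_0_compat; lra. - apply Rlt_div_l; lra. Qed.

Lemma a0_bounds : 0 < a0 <= PI / 2.
Proof.
have Hc := c_bounds. have Hb := acos_bound c. rewrite /a0.
have Hca : cos (acos c) = c by apply cos_acos; lra.
split.
- destruct (Req_dec (acos c) 0) as [E|E]; [|lra]. rewrite E cos_0 in Hca. lra.
- apply Rnot_lt_le => H. have : cos (acos c) < 0 by apply cos_lt_0; lra. lra.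
Qed.

Lemma cos_a0 : cos a0 = c.
Proof. have Hc := c_bounds. apply cos_acos; lra. Qed.

Lemma fder_mono x y : 0 <= x <= y -> y <= 2 * a0 -> fder g y <= fder g x.
Proof.
move=> Hx Hy. have Ha := a0_bounds. have Hc := c_bounds.
rewrite /fder.
have -> : x = 2 * (x / 2) by field. have -> : y = 2 * (y / 2) by field.
rewrite !cos_2a_cos. have -> : 2 * (x / 2) / 2 = x / 2 by field.
have -> : 2 * (y / 2) / 2 = y / 2 by field.
have E1 : cos (y / 2) <= cos (x / 2) by apply cos_decr_1; lra.
have E2 : c <= cos (y / 2) by rewrite -cos_a0; apply cos_decr_1; lra.
have E3 : 4 * g * c = 4 * (1 - g) by rewrite /c; field; lra.
nra.
Qed.

Lemma no_dip p x q : 0 <= p -> p < x -> x < q -> q <= 2 * a0 ->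
  fgam g x <= fgam g p -> fgam g q <= fgam g x.
Proof.
move=> H1 H2 H3 H4 H5. apply Rnot_lt_le => H6.
have [x1 [E1 Hx1]] := MVT_cor2 (fgam g) (fder g) p x H2 (fun t _ => fgam_derive g t).
have [x2 [E2 Hx2]] := MVT_cor2 (fgam g) (fder g) x q H3 (fun t _ => fgam_derive g t).
have M := fder_mono x1 x2 ltac:(lra) ltac:(lra).
have : fder g x1 <= 0 by nra.
have : 0 < fder g x2 by nra.
lra.
Qed.

Lemma fgam_pos th : 0 < th < 2 * a0 -> 0 < fgam g th.
Proof.
move=> H. have Ha := a0_bounds. have Hc := c_bounds. rewrite fgam_half.
have S : 0 < sin (th / 2) by apply sin_gt_0; lra.
have C : c < cos (th / 2) by rewrite -cos_a0; apply cos_decreasing_1; lra.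
have E : g * c = 1 - g by rewrite /c; field; lra.
have : 0 < g * (cos (th/2) - c) by apply Rmult_lt_0_compat; lra.
have : 0 < 2 * sin (th/2) by lra.
move=> P1 P2. replace (g * cos (th / 2) - (1 - g)) with (g * (cos (th / 2) - c)); [|rewrite -E; ring].
by apply Rmult_lt_0_compat.
Qed.

End F.

Lemma sq_inj x y : 0 <= x -> 0 <= y -> x * x = y * y -> x = y.
Proof. move=> Hx Hy E. nra. Qed.

Lemma thr_eq g : 1 / 2 < g <= 1 ->
  (2 * g - 1) * sqrt (2 * g - 1) / sqrt (2 * g) * ((2 - g) / (sqrt (g / 2) + (1 - g)))
  = fgam g (acos ((1 - g) / g)).
Proof.
move=> Hg.
have Hc := c_bounds g Hg. have Ha := a0_bounds g Hg. have Hca := cos_a0 g Hg.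
set c := (1 - g) / g in Hc Hca *. set a0 := acos c in Ha Hca *.
set s := sqrt (g / 2). set s2 := sqrt (2 * g - 1).
have Hs : 0 < s by apply sqrt_lt_R0; lra.
have Hss : s * s = g / 2 by apply sqrt_sqrt; lra.
have Hs2 : 0 <= s2 by apply sqrt_pos.
have Hss2 : s2 * s2 = 2 * g - 1 by apply sqrt_sqrt; lra.
have E1 : sqrt (2 * g) = 2 * s.
{ apply sq_inj; [apply sqrt_pos|lra|]. rewrite sqrt_sqrt; lra. }
have S1 : g * sin a0 = s2.
{ apply sq_inj; [apply Rmult_le_pos; [lra|apply sin_ge_0; lra]|done|].
  have := sin2_cos2 a0. rewrite Hca /Rsqr => H.
  have Ec : g * c = 1 - g by rewrite /c; field; lra.
  rewrite Hss2. nra. }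
have S2 : 2 * s * sin (a0 / 2) = s2.
{ apply sq_inj; [apply Rmult_le_pos; [lra|apply sin_ge_0; lra]|done|].
  have := cos_2a_sin (a0 / 2). have -> : 2 * (a0 / 2) = a0 by field. rewrite Hca => H.
  have Ec : g * c = 1 - g by rewrite /c; field; lra.
  rewrite Hss2.
  have -> : 2 * s * sin (a0 / 2) * (2 * s * sin (a0 / 2)) = 4 * (s * s) * (sin (a0 / 2) * sin (a0 / 2)) by ring.
  rewrite Hss. nra. }
clearbody s s2 a0 c. rewrite /fgam E1.
have -> : sin (a0 / 2) = s2 / (2 * s) by rewrite -S2; field; lra.
have -> : sin a0 = s2 / g by rewrite -S1; field; lra.
have Hden : 0 < s + (1 - g) by lra.
have B : (2 * g - 1) * (2 - g) = 2 * ((s + (1 - g)) * (s - (1 - g))).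
{ have -> : (s + (1 - g)) * (s - (1 - g)) = s * s - (1 - g) * (1 - g) by ring. rewrite Hss. field. }
have -> : g * (s2 / g) = s2 by field; lra.
have -> : (2 * g - 1) * s2 / (2 * s) * ((2 - g) / (s + (1 - g))) =
  s2 / (2 * s) * (((2 * g - 1) * (2 - g)) / (s + (1 - g))) by field; lra.
rewrite B. field. lra.
Qed.

Lemma cos_lip a b : Rabs (cos a - cos b) <= Rabs (a - b).
Proof.
rewrite !cos_sin. have := sin_lip (PI / 2 + a) (PI / 2 + b).
have -> : PI / 2 + a - (PI / 2 + b) = a - b by ring. done.
Qed.

Lemma jordan y : 0 <= y <= PI / 4 -> y * (2 * sqrt 2 / PI) <= sin y.
Proof.
move=> Hy. have HPI := PI_RGT_0.
set k := 2 * sqrt 2 / PI.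
have Hs2 : sqrt 2 * sqrt 2 = 2 by apply sqrt_sqrt; lra.
have Hs2p : 0 < sqrt 2 by apply sqrt_lt_R0; lra.
have Hend : sin (PI / 4) - k * (PI / 4) = 0.
{ rewrite sin_PI4 /k. have E : 1 / sqrt 2 = sqrt 2 / 2 by field_simplify_eq; [lra|lra]. rewrite E. field. lra. }
have Hder : forall t, derivable_pt_lim (fun y => sin y - k * y) t (cos t - k).
{ move=> t. apply is_derive_Reals. auto_derive; [done|]. ring. }
apply Rnot_lt_le => Hlt.
have Hy0 : 0 < y by destruct (Req_dec y 0) as [E|E]; [rewrite E sin_0 in Hlt; lra|lra].
have Hy1 : y < PI / 4 by destruct (Req_dec y (PI / 4)) as [E|E]; [rewrite E in Hlt; lra|lra].
have [x1 [E1 H1]] := MVT_cor2 (fun y => sin y - k * y) (fun t => cos t - k) 0 y Hy0 (fun t _ => Hder t).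
have [x2 [E2 H2]] := MVT_cor2 (fun y => sin y - k * y) (fun t => cos t - k) y (PI / 4) Hy1 (fun t _ => Hder t).
rewrite sin_0 in E1.
have C : cos x2 <= cos x1 by apply cos_decr_1; lra.
have : cos x1 - k < 0 by nra.
have : 0 < cos x2 - k by nra.
lra.
Qed.


Lemma sum_sin_diff (N : nat) (x : 'I_N -> R) U W :
  \big[Rplus/0]_(k < N) sin (x k - U) - \big[Rplus/0]_(k < N) sin (x k - W) =
  - 2 * sin ((U - W) / 2) * \big[Rplus/0]_(k < N) cos (x k - (U + W) / 2).
Proof.
rewrite -sumR_sub -sumR_scal. apply: eq_bigr => k _.
rewrite sin_sub_sin.
have -> : (x k - U + (x k - W)) / 2 = x k - (U + W) / 2 by field.
have -> : (x k - W - (x k - U)) / 2 = (U - W) / 2 by field.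
ring.
Qed.

Lemma rhs_diff (N : nat) (nu : 'I_N -> R) kappa (x : 'I_N -> R) u w U W :
  (forall k, sin (x k - x u) = sin (x k - U)) ->
  (forall k, sin (x k - x w) = sin (x k - W)) ->
  kuramoto_rhs nu kappa x u - kuramoto_rhs nu kappa x w =
  nu u - nu w + kappa / INR N * (- 2 * sin ((U - W) / 2) *
     \big[Rplus/0]_(k < N) cos (x k - (U + W) / 2)).
Proof.
move=> Hu Hw. rewrite /kuramoto_rhs -sum_sin_diff.
rewrite (eq_bigr (fun k => sin (x k - U))); last by move=> k _; apply Hu.
rewrite [X in _ - (_ + _ * X)](eq_bigr (fun k => sin (x k - W))); last by move=> k _; apply Hw.
have G : forall a b c p q : R, a + c * p - (b + c * q) = a - b + c * (p - q) by move=> *; ring.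
apply G.
Qed.

Lemma drift (N : nat) (A : {set 'I_N}) (nu : 'I_N -> R) kappa (x : 'I_N -> R) u w U W g d :
  (0 < N)%coq_nat -> 0 <= kappa -> g <= INR #|A| / INR N -> 0 <= g <= 1 ->
  (forall k, sin (x k - x u) = sin (x k - U)) ->
  (forall k, sin (x k - x w) = sin (x k - W)) ->
  0 <= U - W <= PI -> (forall k, k \in A -> W <= x k <= U) ->
  nu u - nu w <= d ->
  kuramoto_rhs nu kappa x u - kuramoto_rhs nu kappa x w <= d - kappa * fgam g (U - W).
Proof.
move=> HN Hk Hg Hg1 Hu Hw Hz HA Hd.
rewrite (rhs_diff _ nu kappa x u w U W Hu Hw).
set z := U - W.
set S := \big[Rplus/0]_(k < N) cos (x k - (U + W) / 2).
have HNr : 0 < INR N by apply lt_0_INR.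
set a := INR #|A|.
have Ha : a <= INR N.
{ rewrite /a. apply le_INR. have := max_card (mem A). rewrite card_ord. move/leP. done. }
have HS : a * cos (z / 2) + (INR N - a) * (-1) <= S.
{ apply: sum_lb.
  - move=> k Hk'. have H := HA k Hk'. apply (cos_ge_abs (x k - (U + W) / 2) (z / 2)).
    + apply Rabs_le. rewrite /z. lra.
    + move: Hz. rewrite /z. lra.
  - move=> k _. have := COS_bound (x k - (U + W) / 2). lra. }
have Hs : 0 <= sin (z / 2) by apply sin_ge_0; rewrite /z; lra.
have Hsz : 0 <= sin z by apply sin_ge_0; rewrite /z; lra.
have Esz : sin z = 2 * sin (z / 2) * cos (z / 2) by rewrite -sin_2a; f_equal; field.
rewrite /fgam -/z Esz.
set gp := a / INR N.
have Ea : a = gp * INR N by rewrite /gp; field; lra.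
have Hgp : g <= gp by [].
have Hkn : 0 <= kappa / INR N by apply Rdiv_le_0_compat.
have K1 : kappa / INR N * (- 2 * sin (z / 2) * S) <=
          kappa / INR N * (- 2 * sin (z / 2) * (a * cos (z / 2) + (INR N - a) * (-1))).
{ apply Rmult_le_compat_l => //. nra. }
have K2 : kappa / INR N * (- 2 * sin (z / 2) * (a * cos (z / 2) + (INR N - a) * (-1))) =
          - kappa * (gp * (2 * sin (z / 2) * cos (z / 2)) - 2 * (1 - gp) * sin (z / 2)).
{ rewrite Ea. field. lra. }
have K3 : 0 <= (gp - g) * (2 * sin (z / 2) * cos (z / 2) + 2 * sin (z / 2)) by nra.
nra.
Qed.

Lemma pair_bounds (N : nat) (A : {set 'I_N}) (nu : 'I_N -> R) kappa (x : 'I_N -> R) i j D g :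
  (0 < N)%coq_nat -> 0 <= kappa -> g <= INR #|A| / INR N -> 0 <= g <= 1 ->
  i \in A -> j \in A -> 0 <= D <= PI / 2 ->
  (forall p q, p \in A -> q \in A -> Rabs (x p - x q) <= D) ->
  let s := sin ((x i - x j) / 2) in
  let Fd := kuramoto_rhs nu kappa x i - kuramoto_rhs nu kappa x j in
  (0 <= s -> Fd <= nu i - nu j - 2 * kappa * s * (g * cos D - (1 - g))) /\
  (0 <= s -> nu i - nu j - 2 * kappa * s <= Fd) /\
  (s <= 0 -> nu i - nu j - 2 * kappa * s * (g * cos D - (1 - g)) <= Fd).
Proof.
move=> HN Hk Hg Hg1 Hi Hj HD HA s Fd.
have E := rhs_diff _ nu kappa x i j (x i) (x j) (fun k => erefl) (fun k => erefl).
rewrite /Fd E -/s.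
set S := \big[Rplus/0]_(k < N) cos (x k - (x i + x j) / 2).
have HNr : 0 < INR N by apply lt_0_INR.
set a := INR #|A|.
have Ha : a <= INR N.
{ rewrite /a. apply le_INR. have := max_card (mem A). rewrite card_ord. move/leP. done. }
have HS : a * cos D + (INR N - a) * (-1) <= S.
{ apply: sum_lb.
  - move=> k Hk'. apply (cos_ge_abs (x k - (x i + x j) / 2) D); [|lra].
    have H1 := HA k i Hk' Hi. have H2 := HA k j Hk' Hj.
    move/Rabs_le_between: H1 => H1. move/Rabs_le_between: H2 => H2. apply Rabs_le. lra.
  - move=> k _. have := COS_bound (x k - (x i + x j) / 2). lra. }
have HS2 : S <= INR N * 1.
{ apply sum_ub => k. have := COS_bound (x k - (x i + x j) / 2). lra. }
set gp := a / INR N.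
have Ea : a = gp * INR N by rewrite /gp; field; lra.
have HcD : 0 <= cos D by apply cos_ge_0; lra.
have Hcd1 : cos D <= 1 by have := COS_bound D; lra.
have HK : INR N * (g * cos D - (1 - g)) <= S.
{ have P : 0 <= INR N * ((gp - g) * (cos D + 1)).
  { have Hgp : g <= gp by []. apply Rmult_le_pos; [lra|]. apply Rmult_le_pos; lra. }
  rewrite Ea in HS. nra. }
have E2 : kappa / INR N * (-2 * sin ((x i - x j) / 2) * S) = - 2 * kappa * s * (S / INR N).
{ rewrite -/s. field. lra. }
rewrite E2.
have HK' : g * cos D - (1 - g) <= S / INR N.
{ apply Rle_div_r => //. lra. }
have HS3 : S / INR N <= 1 by apply Rle_div_l => //; lra.
split; [|split]; move=> Hs.
- have P : 0 <= kappa * s. { apply Rmult_le_pos; [exact Hk| exact Hs]. }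
  have := Rmult_le_pos _ _ P (ltac:(lra) : 0 <= S / INR N - (g * cos D - (1 - g))). nra.
- have P : 0 <= kappa * s. { apply Rmult_le_pos; [exact Hk| exact Hs]. }
  have := Rmult_le_pos _ _ P (ltac:(lra) : 0 <= 1 - S / INR N). nra.
- have P : 0 <= kappa * (- s) by apply Rmult_le_pos; lra.
  have := Rmult_le_pos _ _ P (ltac:(lra) : 0 <= S / INR N - (g * cos D - (1 - g))). nra.
Qed.


Lemma pairs_mem (N : nat) (A : {set 'I_N}) (q : 'I_N * 'I_N) :
  q \in [seq (x, y) | x <- enum A, y <- enum A] -> q.1 \in A /\ q.2 \in A.
Proof. move/allpairsP => [[a b] [/= Ha Hb ->]] /=. rewrite mem_enum in Ha. rewrite mem_enum in Hb. by split. Qed.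

Lemma pairs_in (N : nat) (A : {set 'I_N}) i j :
  i \in A -> j \in A -> (i, j) \in [seq (x, y) | x <- enum A, y <- enum A].
Proof. move=> Hi Hj. apply: allpairs_f; by rewrite mem_enum. Qed.

Section Main.
Variables (N : nat) (nu : 'I_N -> R) (kappa : R) (th : 'I_N -> R -> R) (A B : {set 'I_N}) (g : R).
Hypothesis HN : (0 < N)%coq_nat.
Hypothesis Hk : 0 < kappa.
Hypothesis Hsol : forall i t, is_derive (th i) t (kuramoto_rhs nu kappa (fun j => th j t) i).
Hypothesis HAB : A \subset B.
Hypothesis Hg : 1 / 2 < g <= 1.
Hypothesis Hfrac : g <= INR #|A| / INR N.
Let d := diam B nu.

Lemma nu_le u w : u \in B -> w \in B -> nu u - nu w <= d.
Proof. move=> Hu Hw. have := diam_pair _ _ nu _ _ Hu Hw. have := Rle_abs (nu u - nu w). rewrite /d; lra. Qed.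

Lemma inB u : u \in A -> u \in B.
Proof. move=> H. exact: (subsetP HAB). Qed.

Lemma deriv_pair u w t0 L0 s t :
  is_derive (fun t => th u t - th w t - (L0 + s * (t - t0))) t
    (kuramoto_rhs nu kappa (fun j => th j t) u - kuramoto_rhs nu kappa (fun j => th j t) w - s).
Proof.
apply: is_derive_minus; [apply: is_derive_minus; apply Hsol|].
auto_derive; [done|]. ring.
Qed.

Lemma cluster_barrier t0 t2 L0 s :
  (forall i j, i \in A -> j \in A -> th i t0 - th j t0 < L0) ->
  (forall t, t0 <= t <= t2 -> 0 <= L0 + s * (t - t0) <= PI /\
                              d - kappa * fgam g (L0 + s * (t - t0)) < s) ->
  forall t i j, t0 <= t <= t2 -> i \in A -> j \in A -> th i t - th j t < L0 + s * (t - t0).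
Proof.
move=> H0 Hc t i j Ht Hi Hj.
set r := [seq (x, y) | x <- enum A, y <- enum A].
have := @barrier _ r (fun q t => th q.1 t - th q.2 t - (L0 + s * (t - t0)))
  (fun q t => kuramoto_rhs nu kappa (fun j => th j t) q.1 - kuramoto_rhs nu kappa (fun j => th j t) q.2 - s)
  t0 t2.
move=> B0. suff : th i t - th j t - (L0 + s * (t - t0)) < 0 by lra.
apply: (B0 _ _ _ t (i, j) Ht (pairs_in _ _ _ _ Hi Hj)).
- move=> q t' _. apply deriv_pair.
- move=> q /pairs_mem [H1 H2]. have := H0 _ _ H1 H2. replace (s * (t0 - t0)) with 0 by ring. move=> HH. rewrite Rplus_0_r. apply Rlt_minus. exact HH.
- move=> t' [u w] Ht' /pairs_mem [/= Hu Hw] Hall /= Hz.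
  have [HL Hf] := Hc t' Ht'.
  set L := L0 + s * (t' - t0) in HL Hf Hz Hall.
  have Hdr := @drift N A nu kappa (fun j => th j t') u w (th u t') (th w t') g d HN
    (Rlt_le _ _ Hk) Hfrac ltac:(lra) (fun k => erefl) (fun k => erefl) ltac:(lra).
  have : forall k, k \in A -> th w t' <= th k t' <= th u t'.
  { move=> k Hk'. have A1 := Hall (u, k) (pairs_in _ _ _ _ Hu Hk'). have A2 := Hall (k, w) (pairs_in _ _ _ _ Hk' Hw).
    simpl in A1, A2. lra. }
  move=> HA. have := Hdr HA (nu_le _ _ (inB _ Hu) (inB _ Hw)).
  have -> : th u t' - th w t' = L by lra. lra.
Qed.

Variables (ell phi1 : R).
Hypothesis Hell : 0 < ell < 2 * acos ((1 - g) / g).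
Hypothesis Hdk : d < kappa * fgam g ell.
Hypothesis Hphi : is_phi1 g kappa d phi1.
Hypothesis Hinit : forall i j, i \in A -> j \in A -> th i 0 - th j 0 <= ell.
Let a0 := acos ((1 - g) / g).

Lemma a0b : 0 < a0 <= PI / 2.
Proof. exact: (a0_bounds g Hg). Qed.

Lemma d_ge0 : 0 <= d.
Proof. exact: diam_ge0. Qed.

Let delta0 := Rmin ((kappa * fgam g ell - d) / kappa) (2 * a0 - ell).

Lemma delta0_pos : 0 < delta0.
Proof.
apply Rmin_pos. - apply Rdiv_lt_0_compat; lra. - rewrite /a0; lra.
Qed.

Lemma near_ell L : ell <= L < ell + delta0 -> d < kappa * fgam g L /\ L < 2 * a0 /\ L <= PI.
Proof.
move=> HL. have H1 := Rmin_l ((kappa * fgam g ell - d) / kappa) (2 * a0 - ell).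
have H2 := Rmin_r ((kappa * fgam g ell - d) / kappa) (2 * a0 - ell).
fold delta0 in H1, H2. have Ha := a0b.
split; [|split; lra].
have Hl := fgam_lip g L ell ltac:(lra).
move/Rabs_le_between: Hl => Hl. rewrite Rabs_right in Hl; [|lra].
have : (L - ell) * kappa < kappa * fgam g ell - d.
{ have : L - ell < (kappa * fgam g ell - d) / kappa by lra.
  move=> HH. apply (Rmult_lt_compat_r kappa) in HH; [|lra].
  move: HH. have -> : (kappa * fgam g ell - d) / kappa * kappa = kappa * fgam g ell - d by field; lra.
  done. }
move=> HH. nra.
Qed.

Lemma inv1 t i j : 0 <= t -> i \in A -> j \in A -> th i t - th j t <= ell.
Proof.
move=> Ht Hi Hj. apply Rnot_lt_le => Hx.
have Hd0 := delta0_pos.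
have [L [HLa [HLb HLc]]] : exists L, ell < L /\ L < th i t - th j t /\ L < ell + delta0.
{ exists (ell + Rmin (th i t - th j t - ell) delta0 / 2).
  have Hm1 := Rmin_l (th i t - th j t - ell) delta0. have Hm2 := Rmin_r (th i t - th j t - ell) delta0.
  have Hm3 : 0 < Rmin (th i t - th j t - ell) delta0 by apply Rmin_pos; lra.
  lra. }
have [Hf [HL1 HL2]] := near_ell L ltac:(lra).
have CB := @cluster_barrier 0 t L 0.
have Hlt : th i t - th j t < L + 0 * (t - 0).
{ refine (CB _ _ t i j (conj Ht (Rle_refl t)) Hi Hj).
  - move=> i' j' Hi' Hj'. have := Hinit i' j' Hi' Hj'. move=> ?; lra.
  - move=> t' _. rewrite Rmult_0_l Rplus_0_r. split; lra. }
rewrite Rmult_0_l Rplus_0_r in Hlt. lra.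
Qed.

Lemma fgam0 : fgam g 0 = 0.
Proof. rewrite /fgam Rdiv_0_l sin_0. ring. Qed.

Lemma phi1_props : 0 <= phi1 < 2 * a0 /\ kappa * fgam g phi1 = d /\ (forall q, 0 <= q < 2 * a0 -> fgam g q = d / kappa -> phi1 <= q).
Proof.
have [[Hp0 Hp1] [Hfp Hmin]] := Hphi. split; [by split|]. split; [|exact Hmin].
rewrite Hfp. field. lra.
Qed.

Lemma root_below b : 0 < b < 2 * a0 -> d < kappa * fgam g b -> phi1 < b.
Proof.
move=> Hb Hdb. have [[Hp0 Hp1] [Hfp Hmin]] := phi1_props.
have Hc : continuity (fun x => fgam g x - d / kappa).
{ apply: continuity_minus; [apply fgam_cont| apply continuity_const => ? ?; done]. }
have Hd0 := d_ge0.
have Hfb : d / kappa < fgam g b.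
{ apply Rlt_div_l; lra. }
have Hdk0 : 0 <= d / kappa by apply Rdiv_le_0_compat; lra.
have [q [Hq Hfq]] := IVT_cor _ 0 b Hc ltac:(lra) ltac:(cbv beta; rewrite fgam0; nra).
have Hqb : q <> b by move=> E; rewrite E in Hfq; lra.
have := Hmin q ltac:(lra) ltac:(lra). lra.
Qed.

Lemma limsup1 eps : 0 < eps ->
  exists T, forall t i j, T <= t -> i \in A -> j \in A -> th i t - th j t <= phi1 + eps.
Proof.
move=> He. have Ha0 := a0b. have [[Hp0 Hp1] [Hfp Hmin]] := phi1_props.
have Hpl : phi1 < ell by apply root_below; [rewrite /a0; lra | lra].
destruct (Rle_dec ell (phi1 + eps)) as [Hle|Hlt].
{ exists 0 => t i j Ht Hi Hj. have := inv1 _ _ _ Ht Hi Hj. move=> ?; lra. }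
have Hd0 := delta0_pos.
have [HfL [HL1 HL2]] := near_ell (ell + delta0 / 2) ltac:(lra).
have Hfa : d < kappa * fgam g (phi1 + eps).
{ apply Rnot_le_lt => Hc.
  have H1 : fgam g (phi1 + eps) <= fgam g phi1.
  { apply (Rmult_le_reg_l kappa); lra. }
  have := no_dip g Hg phi1 (phi1 + eps) ell Hp0 ltac:(lra) ltac:(lra) ltac:(rewrite /a0 in Ha0 *; lra) H1.
  move=> H2. have : kappa * fgam g ell <= kappa * fgam g (phi1 + eps) by apply Rmult_le_compat_l; lra.
  lra. }
have [eta [Heta Hmid]] : exists eta, 0 < eta /\ forall y, phi1 + eps <= y <= ell + delta0 / 2 ->
    eta <= kappa * fgam g y - d.
{ exists (Rmin (kappa * fgam g (phi1 + eps) - d) (kappa * fgam g (ell + delta0 / 2) - d)).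
  split; [apply Rmin_pos; lra|].
  move=> y Hy.
  have M1 := Rmin_l (kappa * fgam g (phi1 + eps) - d) (kappa * fgam g (ell + delta0 / 2) - d).
  have M2 := Rmin_r (kappa * fgam g (phi1 + eps) - d) (kappa * fgam g (ell + delta0 / 2) - d).
  destruct (Rle_dec (fgam g (phi1 + eps)) (fgam g y)) as [H|H].
  - have : kappa * fgam g (phi1 + eps) <= kappa * fgam g y by apply Rmult_le_compat_l; lra.
    lra.
  - have Hy1 : phi1 + eps < y by (destruct (Req_dec y (phi1 + eps)) as [E|E]; [rewrite E in H; lra|lra]).
    destruct (Req_dec y (ell + delta0 / 2)) as [E|E]; [rewrite E; lra|].
    have := no_dip g Hg (phi1 + eps) y (ell + delta0 / 2) ltac:(lra) Hy1 ltac:(lra)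
      ltac:(rewrite /a0 in HL1 *; lra) ltac:(lra).
    move=> H2. have : kappa * fgam g (ell + delta0 / 2) <= kappa * fgam g y by apply Rmult_le_compat_l; lra.
    lra. }
set T1 := 2 * (ell + delta0 / 2 - (phi1 + eps)) / eta.
have HT1 : 0 <= T1 by rewrite /T1; apply Rdiv_le_0_compat; lra.
have ET1 : ell + delta0 / 2 + - (eta / 2) * (T1 - 0) = phi1 + eps by rewrite /T1; field; lra.
clearbody T1.
have CB1 := @cluster_barrier 0 T1 (ell + delta0 / 2) (- (eta / 2)).
have Ph1 : forall i j, i \in A -> j \in A -> th i T1 - th j T1 < phi1 + eps.
{ move=> i j Hi Hj. rewrite -ET1.
  refine (CB1 _ _ T1 i j (conj HT1 (Rle_refl T1)) Hi Hj).
  - move=> i' j' Hi' Hj'. have := inv1 _ _ _ (Rle_refl 0) Hi' Hj'. move=> ?; lra.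
  - move=> t [Ht1 Ht2].
    have Hy : phi1 + eps <= ell + delta0 / 2 + - (eta / 2) * (t - 0) <= ell + delta0 / 2.
    { split; [|nra]. rewrite -ET1. nra. }
    split; [lra|]. have := Hmid _ Hy. move=> ?; lra. }
exists T1 => t i j Ht Hi Hj.
have CB2 := @cluster_barrier T1 t (phi1 + eps) 0.
have : th i t - th j t < phi1 + eps + 0 * (t - T1).
{ refine (CB2 _ _ t i j (conj Ht (Rle_refl t)) Hi Hj).
  - exact Ph1.
  - move=> t' _. rewrite Rmult_0_l Rplus_0_r. split; lra. }
rewrite Rmult_0_l Rplus_0_r. move=> ?; lra.
Qed.

Lemma ell_pi : ell <= PI.
Proof. have := a0b. rewrite /a0. lra. Qed.

Lemma part2_i i p0 t : i \in B -> p0 \in A -> 0 <= t ->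
  Rabs (th i t - th p0 t) <= ell + Rabs (th i 0 - th p0 0) + 2 * PI.
Proof.
move=> HiB Hp0 Ht.
have HPI := PI_RGT_0. have Hnl := nu_le. have Hdk' := Hdk. clearbody d. have Hep := ell_pi.
case: (boolP (i \in A)) => HiA.
{ have := inv1 _ _ _ Ht HiA Hp0. have := inv1 _ _ _ Ht Hp0 HiA. move=> H1 H2.
  have := Rabs_pos (th i 0 - th p0 0). move=> H3. apply Rabs_le. lra. }
have [n [Hn1 Hn2]] : exists n : Z, Rabs (th i 0 - th p0 0) < 2 * PI * IZR n /\
    2 * PI * IZR n <= Rabs (th i 0 - th p0 0) + 2 * PI.
{ exists (up (Rabs (th i 0 - th p0 0) / (2 * PI))).
  have [A1 A2] := archimed (Rabs (th i 0 - th p0 0) / (2 * PI)).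
  split.
  - have := Rmult_lt_compat_l (2 * PI) _ _ ltac:(lra) A1.
    have -> : 2 * PI * (Rabs (th i 0 - th p0 0) / (2 * PI)) = Rabs (th i 0 - th p0 0) by field; lra.
    lra.
  - have := Rmult_le_compat_l (2 * PI) _ _ ltac:(lra) A2.
    have -> : 2 * PI * (IZR (up (Rabs (th i 0 - th p0 0) / (2 * PI))) - Rabs (th i 0 - th p0 0) / (2 * PI))
      = 2 * PI * IZR (up (Rabs (th i 0 - th p0 0) / (2 * PI))) - Rabs (th i 0 - th p0 0) by field; lra.
    lra. }
have Hab := Rabs_le_between (th i 0 - th p0 0) (Rabs (th i 0 - th p0 0)).
have Hab2 : - Rabs (th i 0 - th p0 0) <= th i 0 - th p0 0 <= Rabs (th i 0 - th p0 0) by apply Hab; lra.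
have Hfl : d - kappa * fgam g ell < 0 by lra.

have Up : forall p, p \in A -> th i t - th p t < ell + 2 * PI * IZR n + 0 * (t - 0).
{ move=> p Hp.
  have := @barrier _ (enum A) (fun q s => th i s - th q s - (ell + 2 * PI * IZR n + 0 * (s - 0)))
    (fun q s => kuramoto_rhs nu kappa (fun j => th j s) i - kuramoto_rhs nu kappa (fun j => th j s) q - 0)
    0 t.
  move=> B0. suff : th i t - th p t - (ell + 2 * PI * IZR n + 0 * (t - 0)) < 0 by move=> ?; lra.
  apply: (B0 _ _ _ t p (conj Ht (Rle_refl t))); last by rewrite mem_enum.
  - move=> q s _. apply deriv_pair.
  - move=> q Hq. rewrite mem_enum in Hq. have := inv1 _ _ _ (Rle_refl 0) Hp0 Hq.
    rewrite Rmult_0_l Rplus_0_r. move=> ?; lra.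
  - move=> s w Hs Hw Hall Hz. rewrite mem_enum in Hw. rewrite Rmult_0_l Rplus_0_r in Hz.
    have HA : forall k, k \in A -> th w s <= th k s <= th w s + ell.
    { move=> k Hk'. have := Hall k ltac:(by rewrite mem_enum). rewrite Rmult_0_l Rplus_0_r.
      have := inv1 _ _ _ (proj1 Hs) Hk' Hw. move=> ? ?; lra. }
    have Hdr := @drift N A nu kappa (fun j => th j s) i w (th i s - 2 * PI * IZR n) (th w s) g d HN
      (Rlt_le _ _ Hk) Hfrac ltac:(lra).
    have Hsn : forall k, sin (th k s - th i s) = sin (th k s - (th i s - 2 * PI * IZR n)).
    { move=> k. have -> : th k s - (th i s - 2 * PI * IZR n) = th k s - th i s + 2 * PI * IZR n by ring.
      by rewrite sin_Zper. }
    have HR := Hdr Hsn (fun k => erefl) ltac:(lra) ltac:(move=> k Hk'; have := HA k Hk'; move=> ?; lra)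
              (Hnl _ _ HiB (inB _ Hw)).
    have E : th i s - 2 * PI * IZR n - th w s = ell by lra.
    rewrite E in HR. cbv beta. lra. }
have Lo : forall p, p \in A -> th p t - th i t < ell + 2 * PI * IZR n + 0 * (t - 0).
{ move=> p Hp.
  have := @barrier _ (enum A) (fun q s => th q s - th i s - (ell + 2 * PI * IZR n + 0 * (s - 0)))
    (fun q s => kuramoto_rhs nu kappa (fun j => th j s) q - kuramoto_rhs nu kappa (fun j => th j s) i - 0)
    0 t.
  move=> B0. suff : th p t - th i t - (ell + 2 * PI * IZR n + 0 * (t - 0)) < 0 by move=> ?; lra.
  apply: (B0 _ _ _ t p (conj Ht (Rle_refl t))); last by rewrite mem_enum.
  - move=> q s _. apply deriv_pair.
  - move=> q Hq. rewrite mem_enum in Hq. have := inv1 _ _ _ (Rle_refl 0) Hq Hp0.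
    rewrite Rmult_0_l Rplus_0_r. move=> ?; lra.
  - move=> s u Hs Hu Hall Hz. rewrite mem_enum in Hu. rewrite Rmult_0_l Rplus_0_r in Hz.
    have HA : forall k, k \in A -> th u s - ell <= th k s <= th u s.
    { move=> k Hk'. have := Hall k ltac:(by rewrite mem_enum). rewrite Rmult_0_l Rplus_0_r.
      have := inv1 _ _ _ (proj1 Hs) Hu Hk'. move=> ? ?; lra. }
    have Hdr := @drift N A nu kappa (fun j => th j s) u i (th u s) (th i s + 2 * PI * IZR n) g d HN
      (Rlt_le _ _ Hk) Hfrac ltac:(lra).
    have Hsn : forall k, sin (th k s - th i s) = sin (th k s - (th i s + 2 * PI * IZR n)).
    { move=> k. have -> : th k s - (th i s + 2 * PI * IZR n) = th k s - th i s + 2 * PI * IZR (- n) by rewrite opp_IZR; ring.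
      by rewrite sin_Zper. }
    have HR := Hdr (fun k => erefl) Hsn
              ltac:(lra) ltac:(move=> k Hk'; have := HA k Hk'; move=> ?; lra)
              (Hnl _ _ (inB _ Hu) HiB).
    have E : th u s - (th i s + 2 * PI * IZR n) = ell by lra.
    rewrite E in HR. cbv beta. lra. }
have := Up p0 Hp0. have := Lo p0 Hp0. rewrite !Rmult_0_l !Rplus_0_r. move=> H1 H2.
apply Rabs_le. lra.
Qed.


Lemma phi1_lt_a0 (Hthr : d < kappa * fgam g a0) : phi1 < a0.
Proof. apply root_below; [have := a0b; lra|exact Hthr]. Qed.

Lemma Kpos b : 0 <= b < a0 -> 0 < g * cos b - (1 - g).
Proof.
move=> Hb. have Ha := a0b. have Hc := cos_a0 g Hg. fold a0 in Hc.
have : cos a0 < cos b by apply cos_decreasing_1; lra.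
rewrite Hc. move=> H. have : g * ((1 - g) / g) = 1 - g by field; lra.
move=> E. nra.
Qed.

Lemma Kclose e1 : 0 <= e1 -> g * cos phi1 - (1 - g) - e1 <= g * cos (phi1 + e1) - (1 - g).
Proof.
move=> He. have := cos_lip phi1 (phi1 + e1). have -> : phi1 - (phi1 + e1) = - e1 by ring.
rewrite Rabs_Ropp (Rabs_right e1); [|lra]. move/Rabs_le_between => H. nra.
Qed.

Lemma deriv_x i j t : is_derive (fun t => th i t - th j t) t
  (kuramoto_rhs nu kappa (fun k => th k t) i - kuramoto_rhs nu kappa (fun k => th k t) j).
Proof. apply: is_derive_minus; apply Hsol. Qed.

Lemma pair_ev i j e1 : i \in A -> j \in A -> 0 < e1 -> phi1 + e1 <= PI / 2 ->
  exists T, forall t, T <= t ->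
  Rabs (th i t - th j t) <= phi1 + e1 /\
  (0 <= sin ((th i t - th j t) / 2) ->
     kuramoto_rhs nu kappa (fun k => th k t) i - kuramoto_rhs nu kappa (fun k => th k t) j <=
     nu i - nu j - 2 * kappa * sin ((th i t - th j t) / 2) * (g * cos (phi1 + e1) - (1 - g))) /\
  (0 <= sin ((th i t - th j t) / 2) ->
     nu i - nu j - 2 * kappa * sin ((th i t - th j t) / 2) <=
     kuramoto_rhs nu kappa (fun k => th k t) i - kuramoto_rhs nu kappa (fun k => th k t) j) /\
  (sin ((th i t - th j t) / 2) <= 0 ->
     nu i - nu j - 2 * kappa * sin ((th i t - th j t) / 2) * (g * cos (phi1 + e1) - (1 - g)) <=
     kuramoto_rhs nu kappa (fun k => th k t) i - kuramoto_rhs nu kappa (fun k => th k t) j).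
Proof.
move=> Hi Hj He1 HD. have [[Hp0 Hp1] _] := phi1_props.
have [T HT] := limsup1 _ He1.
exists T => t Ht.
have Hall : forall p q, p \in A -> q \in A -> Rabs (th p t - th q t) <= phi1 + e1.
{ move=> p q Hp Hq. apply Rabs_le. have := HT t p q Ht Hp Hq. have := HT t q p Ht Hq Hp. move=> ? ?; lra. }
split; [by apply Hall|].
have := @pair_bounds N A nu kappa (fun k => th k t) i j (phi1 + e1) g HN (Rlt_le _ _ Hk) Hfrac
  ltac:(lra) Hi Hj ltac:(lra) Hall.
cbv zeta. move=> [P1 [P2 P3]]. split; [exact P1|split; [exact P2|exact P3]].
Qed.

Lemma sin_half_sign x : Rabs x <= PI / 2 ->
  (0 <= x -> 0 <= sin (x / 2) /\ 2 * sin (x / 2) <= x) /\ (x <= 0 -> sin (x / 2) <= 0).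
Proof.
move=> Hx. move/Rabs_le_between: Hx => Hx. have HPI := PI_RGT_0. split => H.
- split; [apply sin_ge_0; lra|].
  destruct (Req_dec x 0) as [E|E]; [rewrite E Rdiv_0_l sin_0; lra|].
  have := sin_lt_x (x / 2) ltac:(lra). lra.
- have := sin_ge_0 (- (x / 2)) ltac:(lra) ltac:(lra). rewrite sin_neg. lra.
Qed.

Lemma part3a (Hthr : d < kappa * fgam g a0) i j : i \in A -> j \in A -> nu j < nu i ->
  liminf_ge (fun t => th i t - th j t) ((nu i - nu j) / kappa).
Proof.
move=> Hi Hj Hnu eps He.
have Ha := a0b. have Hpa := phi1_lt_a0 Hthr. have [[Hp0 _] _] := phi1_props.
have HK1 := Kpos (phi1 + (a0 - phi1) / 2) ltac:(lra).
have [T HT] := pair_ev i j ((a0 - phi1) / 2) Hi Hj ltac:(lra) ltac:(lra).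
have Hr : 0 < Rmin (nu i - nu j) (kappa * eps) by apply Rmin_pos; nra.
have Hm1 := Rmin_l (nu i - nu j) (kappa * eps). have Hm2 := Rmin_r (nu i - nu j) (kappa * eps).
have Ec : kappa * ((nu i - nu j) / kappa - eps) = nu i - nu j - kappa * eps by field; lra.
have Hcond : forall t, T <= t -> th i t - th j t <= (nu i - nu j) / kappa - eps ->
    Rmin (nu i - nu j) (kappa * eps) <=
    kuramoto_rhs nu kappa (fun k => th k t) i - kuramoto_rhs nu kappa (fun k => th k t) j.
{ move=> t Ht Hx.
  have [Habs [P1 [P2 P3]]] := HT t Ht.
  have [S1 S2] := sin_half_sign (th i t - th j t) ltac:(lra).
  destruct (Rle_dec 0 (th i t - th j t)) as [H0|H0].
  - have [Sa Sb] := S1 H0. have := P2 Sa. move=> Q.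
    have : kappa * (2 * sin ((th i t - th j t) / 2)) <= kappa * ((nu i - nu j) / kappa - eps).
    { apply Rmult_le_compat_l; lra. }
    lra.
  - have Sc := S2 ltac:(lra). have := P3 Sc. move=> Q.
    have : 0 <= kappa * (- sin ((th i t - th j t) / 2)) * (g * cos (phi1 + (a0 - phi1) / 2) - (1 - g)).
    { apply Rmult_le_pos; [apply Rmult_le_pos|]; lra. }
    lra. }
have [T' HT'] := reach _ _ T ((nu i - nu j) / kappa - eps) _ (deriv_x i j) Hr Hcond.
exists T' => t Ht. have := HT' t Ht. move=> ?; lra.
Qed.

Lemma part3c (Hthr : d < kappa * fgam g a0) i j : i \in A -> j \in A -> nu i = nu j ->
  forall eps, 0 < eps -> exists T, forall t, T <= t -> Rabs (th i t - th j t) < eps.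
Proof.
move=> Hi Hj Hnu eps He.
have Ha := a0b. have Hpa := phi1_lt_a0 Hthr. have [[Hp0 _] _] := phi1_props.
have HK1 := Kpos (phi1 + (a0 - phi1) / 2) ltac:(lra).
have [T HT] := pair_ev i j ((a0 - phi1) / 2) Hi Hj ltac:(lra) ltac:(lra).
have HPI := PI_RGT_0.
have He1 := Rmin_l eps (PI / 2). have He2 := Rmin_r eps (PI / 2).
have He3 : 0 < Rmin eps (PI / 2) by apply Rmin_pos; lra.
have Hse : 0 < sin (Rmin eps (PI / 2) / 2) by apply sin_gt_0; lra.
set K1 := g * cos (phi1 + (a0 - phi1) / 2) - (1 - g) in HK1 HT.
set e := Rmin eps (PI / 2) in He1 He2 He3 Hse.
have Hr : 0 < 2 * kappa * K1 * sin (e / 2).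
{ apply Rmult_lt_0_compat; [apply Rmult_lt_0_compat|]; lra. }
have Hc1 : forall t, T <= t -> th j t - th i t <= - e ->
    2 * kappa * K1 * sin (e / 2) <=
    kuramoto_rhs nu kappa (fun k => th k t) j - kuramoto_rhs nu kappa (fun k => th k t) i.
{ move=> t Ht Hx.
  have [Habs [P1 [P2 P3]]] := HT t Ht. move/Rabs_le_between: Habs => Habs.
  have Hs : sin (e / 2) <= sin ((th i t - th j t) / 2) by apply sin_incr_1; lra.
  have Hs0 : 0 <= sin ((th i t - th j t) / 2) by lra.
  have Q := P1 Hs0.
  have : 0 <= kappa * K1 * (sin ((th i t - th j t) / 2) - sin (e / 2)).
  { apply Rmult_le_pos; [apply Rmult_le_pos|]; lra. }
  rewrite Hnu in Q. lra. }
have Hc2 : forall t, T <= t -> th i t - th j t <= - e ->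
    2 * kappa * K1 * sin (e / 2) <=
    kuramoto_rhs nu kappa (fun k => th k t) i - kuramoto_rhs nu kappa (fun k => th k t) j.
{ move=> t Ht Hx.
  have [Habs [P1 [P2 P3]]] := HT t Ht. move/Rabs_le_between: Habs => Habs.
  have Hs : sin ((th i t - th j t) / 2) <= sin (- (e / 2)) by apply sin_incr_1; lra.
  rewrite sin_neg in Hs.
  have Hs0 : sin ((th i t - th j t) / 2) <= 0 by lra.
  have Q := P3 Hs0.
  have : 0 <= kappa * K1 * (- sin (e / 2) - sin ((th i t - th j t) / 2)).
  { apply Rmult_le_pos; [apply Rmult_le_pos|]; lra. }
  rewrite Hnu in Q. lra. }
have [T1 HT1] := reach _ _ T (- e) _ (deriv_x j i) Hr Hc1.
have [T2 HT2] := reach _ _ T (- e) _ (deriv_x i j) Hr Hc2.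
exists (Rmax T1 T2) => t Ht.
have := HT1 t ltac:(have := Rmax_l T1 T2; lra). have := HT2 t ltac:(have := Rmax_r T1 T2; lra).
move=> A1 A2. apply Rabs_def1; lra.
Qed.

Lemma k23 : 2 / 3 <= 2 * sqrt 2 / PI.
Proof.
have HPI := PI_RGT_0. have H4 := PI_4.
have Hs : 7 / 5 <= sqrt 2.
{ apply Rnot_lt_le => H. have Hs2 : sqrt 2 * sqrt 2 = 2 by apply sqrt_sqrt; lra.
  have := sqrt_pos 2. nra. }
have H2 : 2 / 3 * PI <= 2 * sqrt 2 by lra. apply (Rmult_le_reg_r PI); [lra|]. have -> : 2 * sqrt 2 / PI * PI = 2 * sqrt 2 by field; lra. lra.
Qed.

Lemma part3b (Hthr : d < kappa * fgam g a0) i j : i \in A -> j \in A -> nu j < nu i ->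
  limsup_le (fun t => th i t - th j t)
    (PI / (2 * sqrt 2 * (g * cos phi1 - (1 - g))) * ((nu i - nu j) / kappa)).
Proof.
move=> Hi Hj Hnu eps He.
have Ha := a0b. have Hpa := phi1_lt_a0 Hthr. have [[Hp0 _] _] := phi1_props.
have HPI := PI_RGT_0.
have HK0 := Kpos phi1 (conj Hp0 Hpa).
have Hkk := k23.
have Hs2 : 0 < sqrt 2 by apply sqrt_lt_R0; lra.
set K0 := g * cos phi1 - (1 - g) in HK0 *.
set D := nu i - nu j.
have HD : 0 < D by rewrite /D; lra.
set e1 := Rmin ((a0 - phi1) / 2) (Rmin (K0 / 2) (kappa * K0 * K0 * eps / (6 * D))).
have He1a := Rmin_l ((a0 - phi1) / 2) (Rmin (K0 / 2) (kappa * K0 * K0 * eps / (6 * D))).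
have He1b := Rmin_r ((a0 - phi1) / 2) (Rmin (K0 / 2) (kappa * K0 * K0 * eps / (6 * D))).
have He1c := Rmin_l (K0 / 2) (kappa * K0 * K0 * eps / (6 * D)).
have He1d := Rmin_r (K0 / 2) (kappa * K0 * K0 * eps / (6 * D)).
have Hq : 0 < kappa * K0 * K0 * eps / (6 * D).
{ apply Rdiv_lt_0_compat; [|lra]. repeat apply Rmult_lt_0_compat; lra. }
have He1p : 0 < e1 by rewrite /e1; apply Rmin_pos; [lra|apply Rmin_pos; lra].
rewrite -/e1 in He1a He1b. clearbody e1.
have HK1c := Kclose e1 (Rlt_le _ _ He1p). rewrite -/K0 in HK1c.
set K1 := g * cos (phi1 + e1) - (1 - g) in HK1c *.
have [T HT] := pair_ev i j e1 Hi Hj He1p ltac:(lra).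
rewrite -/K1 in HT.
set B0 := PI / (2 * sqrt 2 * K0) * (D / kappa).
have HB0 : 0 <= B0.
{ rewrite /B0. apply Rmult_le_pos; apply Rlt_le; apply Rdiv_lt_0_compat; try lra.
  repeat apply Rmult_lt_0_compat; lra. }
have Ekey : kappa * (2 * sqrt 2 / PI) * B0 = D / K0.
{ rewrite /B0. field. repeat split; lra. }
clearbody B0.
destruct (Rle_dec (B0 + eps) (PI / 2)) as [HX|HX]; last first.
{ exists T => t Ht. have [Habs _] := HT t Ht. move/Rabs_le_between: Habs => Habs. lra. }
have Hjd := jordan ((B0 + eps) / 2) ltac:(lra).
set k := 2 * sqrt 2 / PI in Hkk Ekey Hjd.
have F1 : D - e1 * D / K0 <= K1 * D / K0.
{ have : (K0 - e1) * D / K0 <= K1 * D / K0.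
  { apply Rmult_le_compat_r; [apply Rlt_le, Rinv_0_lt_compat; lra|]. apply Rmult_le_compat_r; lra. }
  have -> : (K0 - e1) * D / K0 = D - e1 * D / K0 by field; lra. done. }
have F2 : e1 * D / K0 <= kappa * K0 * eps / 6.
{ have : e1 * D / K0 <= kappa * K0 * K0 * eps / (6 * D) * D / K0.
  { apply Rmult_le_compat_r; [apply Rlt_le, Rinv_0_lt_compat; lra|]. apply Rmult_le_compat_r; lra. }
  have -> : kappa * K0 * K0 * eps / (6 * D) * D / K0 = kappa * K0 * eps / 6 by field; lra. done. }
have F3 : kappa * K0 * eps / 3 <= kappa * K1 * k * eps.
{ have : kappa * (K0 / 2) * (2 / 3) * eps <= kappa * K1 * k * eps.
  { apply Rmult_le_compat_r; [lra|]. apply Rmult_le_compat; try lra.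
    - apply Rmult_le_pos; lra.
    - apply Rmult_le_compat_l; lra. }
  move=> ?; lra. }
have F4 : kappa * K1 * k * (B0 + eps) = K1 * D / K0 + kappa * K1 * k * eps.
{ have -> : K1 * D / K0 = K1 * (D / K0) by field; lra. rewrite -Ekey. ring. }
have F5 : kappa * K1 * k * (B0 + eps) <= 2 * kappa * K1 * sin ((B0 + eps) / 2).
{ have -> : kappa * K1 * k * (B0 + eps) = 2 * kappa * K1 * ((B0 + eps) / 2 * k) by field.
  apply Rmult_le_compat_l; [|exact Hjd]. apply Rmult_le_pos; lra. }
have Hr : 0 < 2 * kappa * K1 * sin ((B0 + eps) / 2) - D.
{ have : 0 < kappa * K0 * eps by repeat apply Rmult_lt_0_compat; lra. lra. }
have Hc : forall t, T <= t -> th j t - th i t <= - (B0 + eps) ->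
    2 * kappa * K1 * sin ((B0 + eps) / 2) - D <=
    kuramoto_rhs nu kappa (fun k => th k t) j - kuramoto_rhs nu kappa (fun k => th k t) i.
{ move=> t Ht Hx.
  have [Habs [P1 [P2 P3]]] := HT t Ht. move/Rabs_le_between: Habs => Habs.
  have Hs : sin ((B0 + eps) / 2) <= sin ((th i t - th j t) / 2) by apply sin_incr_1; lra.
  have Hsp : 0 <= sin ((B0 + eps) / 2) by apply sin_ge_0; lra.
  have Q := P1 ltac:(lra).
  have : 0 <= kappa * K1 * (sin ((th i t - th j t) / 2) - sin ((B0 + eps) / 2)).
  { apply Rmult_le_pos; [apply Rmult_le_pos|]; lra. }
  rewrite -/D in Q. move=> ?; lra. }
have [T' HT'] := reach _ _ T (- (B0 + eps)) _ (deriv_x j i) Hr Hc.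
exists T' => t Ht. have := HT' t Ht. move=> ?; lra.
Qed.

Lemma A_nonempty : exists p0, p0 \in A.
Proof.
apply/card_gt0P. apply/ltP. apply INR_lt. rewrite INR_0.
apply Rnot_le_lt => H. have H0 : INR #|A| = 0 by have := pos_INR #|A|; lra.
have := Hfrac. rewrite H0 Rdiv_0_l. move=> ?; lra.
Qed.

Lemma master :
  ((forall t, 0 <= t -> diam A (fun i => th i t) <= ell) /\
   limsup_le (fun t => diam A (fun i => th i t)) phi1) /\
  (exists M, forall t, 0 <= t -> diam B (fun i => th i t) <= M) /\
  (d < kappa * fgam g a0 -> forall i j, i \in A -> j \in A ->
   (nu i > nu j ->
      liminf_ge (fun t => th i t - th j t) ((nu i - nu j) / kappa) /\
      limsup_le (fun t => th i t - th j t)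
        (PI / (2 * sqrt 2 * (g * cos phi1 - (1 - g))) * ((nu i - nu j) / kappa))) /\
   (nu i = nu j -> is_lim (fun t => th i t - th j t) p_infty 0)).
Proof.
have [[Hp0 _] _] := phi1_props.
split; [split|split].
- move=> t Ht. apply diam_le; [lra|]. move=> i j Hi Hj. apply Rabs_le.
  have := inv1 _ _ _ Ht Hi Hj. have := inv1 _ _ _ Ht Hj Hi. move=> ? ?; lra.
- move=> eps He. have [T HT] := limsup1 _ He. exists T => t Ht.
  apply diam_le; [lra|]. move=> i j Hi Hj. apply Rabs_le.
  have := HT t i j Ht Hi Hj. have := HT t j i Ht Hj Hi. move=> ? ?; lra.
- have [p0 Hp0A] := A_nonempty.
  set Mb := \big[Rmax/0]_(i in B) Rabs (th i 0 - th p0 0).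
  have HMb : forall i, i \in B -> Rabs (th i 0 - th p0 0) <= Mb.
  { move=> i Hi. apply: (@bigmax_ge _ _ _ (fun i => Rabs (th i 0 - th p0 0))) => //.
    by rewrite mem_index_enum. }
  have HMb0 : 0 <= Mb.
  { rewrite /Mb. apply: (big_ind (fun v => 0 <= v)) => //; [lra| |].
    - move=> a b Ha Hb. eapply Rle_trans; [exact Ha| apply Rmax_l].
    - move=> i _. apply Rabs_pos. }
  have Hep := ell_pi. have HPI := PI_RGT_0.
  exists (2 * (ell + 2 * PI + Mb)) => t Ht.
  apply diam_le; [lra|]. move=> i j Hi Hj.
  have Hi' := part2_i i p0 t Hi Hp0A Ht. have Hj' := part2_i j p0 t Hj Hp0A Ht.
  have := HMb i Hi. have := HMb j Hj.
  have := Rabs_triang (th i t - th p0 t) (th p0 t - th j t).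
  have -> : th i t - th p0 t + (th p0 t - th j t) = th i t - th j t by ring.
  rewrite -(Rabs_Ropp (th p0 t - th j t)).
  have -> : - (th p0 t - th j t) = th j t - th p0 t by ring.
  move=> ? ? ?; lra.
- move=> Hthr i j Hi Hj. split.
  + move=> Hnu. split; [exact: part3a | exact: part3b].
  + move=> Hnu. apply is_lim_spec => eps.
    have [T HT] := part3c Hthr i j Hi Hj Hnu eps (cond_pos eps).
    exists T => t Ht. rewrite Rminus_0_r. apply HT. lra.
Qed.

End Main.


Lemma shift_eq (N : nat) (A : {set 'I_N}) (m : 'I_N -> Z) (theta : 'I_N -> R -> R) i t :
  shift_on A m theta i t = theta i t + 2 * PI * IZR (if i \in A then m i else 0%Z).
Proof. rewrite /shift_on. case: (i \in A) => //. rewrite Rmult_0_r Rplus_0_r. done. Qed.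

Lemma shift_sol (N : nat) (nu : 'I_N -> R) kappa (A : {set 'I_N}) (m : 'I_N -> Z) (theta : 'I_N -> R -> R) :
  kuramoto_solution nu kappa theta ->
  forall i t, is_derive (shift_on A m theta i) t
    (kuramoto_rhs nu kappa (fun j => shift_on A m theta j t) i).
Proof.
move=> Hs i t.
have E : kuramoto_rhs nu kappa (fun j => shift_on A m theta j t) i =
         kuramoto_rhs nu kappa (fun j => theta j t) i.
{ rewrite /kuramoto_rhs. f_equal. f_equal. apply: eq_bigr => j _.
  rewrite !shift_eq.
  have -> : theta j t + 2 * PI * IZR (if j \in A then m j else 0%Z) -
            (theta i t + 2 * PI * IZR (if i \in A then m i else 0%Z)) =
            theta j t - theta i t + 2 * PI * IZR ((if j \in A then m j else 0%Z) - (if i \in A then m i else 0%Z))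
    by rewrite minus_IZR; ring.
  by rewrite sin_Zper. }
rewrite E.
apply: (is_derive_ext (fun s => theta i s + 2 * PI * IZR (if i \in A then m i else 0%Z))).
- move=> s. by rewrite shift_eq.
- have := is_derive_plus (fun s => theta i s) (fun _ => 2 * PI * IZR (if i \in A then m i else 0%Z)) t _ 0 (Hs i t) (is_derive_const _ t).
  rewrite /plus /=. by rewrite Rplus_0_r.
Qed.

Theorem theorem3p1 (N : nat) (nu : 'I_N -> R) (kappa : R)
  (theta : 'I_N -> R -> R) (A B : {set 'I_N}) (gamma ell : R) :
  (2 <= N)%nat ->
  0 <= kappa ->
  kuramoto_solution nu kappa theta ->
  A \subset B ->
  1 / 2 < gamma <= 1 ->
  0 < ell < 2 * acos (1 / gamma - 1) ->
  kappa > diam B nu / (gamma * sin ell - 2 * (1 - gamma) * sin (ell / 2)) ->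
  gamma_ensemble_arclength A gamma ell theta 0 ->
  forall (m : 'I_N -> Z) (phi1 : R),
  diam A (fun i => shift_on A m theta i 0) <= ell ->
  is_phi1 gamma kappa (diam B nu) phi1 ->
  let th := shift_on A m theta in
  (* (1) *)
  ((forall t, 0 <= t -> diam A (fun i => th i t) <= ell) /\
   limsup_le (fun t => diam A (fun i => th i t)) phi1) /\
  (* (2) *)
  (exists M, forall t, 0 <= t -> diam B (fun i => th i t) <= M) /\
  (* (3) *)
  (diam B nu / kappa <
     (2 * gamma - 1) * sqrt (2 * gamma - 1) / sqrt (2 * gamma)
     * ((2 - gamma) / (sqrt (gamma / 2) + (1 - gamma))) ->
   forall i j, i \in A -> j \in A ->
   (nu i > nu j ->
      liminf_ge (fun t => th i t - th j t) ((nu i - nu j) / kappa) /\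
      limsup_le (fun t => th i t - th j t)
        (PI / (2 * sqrt 2 * (gamma * cos phi1 - (1 - gamma))) * ((nu i - nu j) / kappa))) /\
   (nu i = nu j -> is_lim (fun t => th i t - th j t) p_infty 0)).
Proof.
move=> HN2 Hk0 Hsol0 HAB Hg Hell Hkap Hens m phi1 Hm0 Hphi th.
have HN : (0 < N)%coq_nat by move/ltP: HN2 => HN2; lia.
have Hfrac : gamma <= INR #|A| / INR N by have [H _] := Hens; rewrite /gamma_ensemble in H; lra.
have Ec : 1 / gamma - 1 = (1 - gamma) / gamma by field; lra.
rewrite Ec in Hell.
have Hden : 0 < fgam gamma ell by apply fgam_pos; lra.
have Hd0 : 0 <= diam B nu by apply diam_ge0.
have Hdk : diam B nu < kappa * fgam gamma ell.
{ have : diam B nu / fgam gamma ell < kappa by exact Hkap.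
  move=> H. apply (Rmult_lt_compat_r (fgam gamma ell)) in H; [|lra].
  move: H. have -> : diam B nu / fgam gamma ell * fgam gamma ell = diam B nu by field; lra.
  move=> ?; lra. }
have Hk : 0 < kappa.
{ apply Rnot_le_lt => H. have : kappa * fgam gamma ell <= 0 by nra. lra. }
have Hsol := shift_sol _ nu kappa A m theta Hsol0.
have Hinit : forall i j, i \in A -> j \in A -> th i 0 - th j 0 <= ell.
{ move=> i j Hi Hj. have := diam_pair _ _ (fun i => shift_on A m theta i 0) _ _ Hi Hj.
  have := Rle_abs (th i 0 - th j 0). rewrite /th. move=> ? ?; lra. }
have M := master N nu kappa th A B gamma HN Hk Hsol HAB Hg Hfrac ell phi1 Hell Hdk Hphi Hinit.
rewrite /th. move: M => [P1 [P2 P3]]. split; [exact P1|split; [exact P2|]].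
move=> Hthr. apply P3.
rewrite thr_eq in Hthr; [|lra].
have := Rmult_lt_compat_l kappa _ _ Hk Hthr.
have -> : kappa * (diam B nu / kappa) = diam B nu by field; lra.
done.
Qed.
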